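(* Let $L\in(0,\infty)$ and for $k\in\mathbb{N}$ put $n_k:=\lfloor (k/L)^2\rfloor$. Let $x\in F(1/2,1)$ and $\epsilon\in(0,\infty)$ small. Then for all sufficiently large $k$, $$(1-\epsilon)\,e^{k/L}\ \le\ S_{n_k}(x)-S_{n_{k-1}}(x)\ \le\ (1+\epsilon)\Big(\frac{k}{L}\Big)^2 e^{k/L}.$$
   Context: Every $x\in(0,1)\setminus\mathbb{Q}$ has a unique infinite continued fraction expansion $x=[a_1(x),a_2(x),\dots]$ with partial quotients $a_i(x)\in\mathbb{N}=\{1,2,\dots\}$. For $n\in\mathbb{N}$ let $T_n(x):=\max\{a_k(x):1\le k\le n\}$ and $S_n(x):=\sum_{j=1}^n a_j(x)$. Define $$F(1/2,1):=\Big\{x\in(0,1)\setminus\mathbb{Q}:\ \lim_{n\to\infty}\frac{T_n(x)}{e^{\sqrt{n}}}=1\Big\}.$$ *)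

(* Defs.v *)
From Stdlib Require Import Reals Lra Lia ZArith Arith.
Open Scope R_scope.

(* floor: Int_part r = up r - 1 is exactly the floor of r in Stdlib. *)
Definition floorR (r : R) : Z := Int_part r.

Definition irrational (x : R) : Prop :=
  ~ (exists p q : Z, q <> 0%Z /\ x = IZR p / IZR q).

Definition gauss (x : R) : R := / x - IZR (floorR (/ x)).

(* a_n(x) for n >= 1: a_n(x) = floor(1 / T^{n-1}(x)); a_0 is a dummy value *)
Definition pq (n : nat) (x : R) : nat :=
  match n with
  | O => 0%nat
  | S m => Z.to_nat (floorR (/ (Nat.iter m gauss x)))
  end.

Fixpoint Tmax (n : nat) (x : R) : nat :=
  match n with
  | O => 0%nat
  | S m => Nat.max (Tmax m x) (pq (S m) x)
  end.

Fixpoint Ssum (n : nat) (x : R) : nat :=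
  match n with
  | O => 0%nat
  | S m => (Ssum m x + pq (S m) x)%nat
  end.

Definition F_half_one (x : R) : Prop :=
  0 < x < 1 /\ irrational x /\
  Un_cv (fun n => INR (Tmax n x) / exp (sqrt (INR n))) 1.

Definition nk (L : R) (k : nat) : nat := Z.to_nat (floorR ((INR k / L) ^ 2)).

(* Main.v *)
Require Import Defs.
From Stdlib Require Import Reals Lra Lia ZArith.
Open Scope R_scope.

Lemma exple a b : a <= b -> exp a <= exp b.
Proof. intros [H|H]. left; apply exp_increasing; auto. subst; lra. Qed.

Lemma Ssum_mono x m n : (m <= n)%nat -> (Ssum m x <= Ssum n x)%nat.
Proof. induction 1; simpl; lia. Qed.

Lemma Tmax_mono x m n : (m <= n)%nat -> (Tmax m x <= Tmax n x)%nat.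
Proof. induction 1; simpl; lia. Qed.

Lemma S_lower x n : forall m, (m <= n)%nat -> (Tmax m x < Tmax n x)%nat ->
  (Ssum m x + Tmax n x <= Ssum n x)%nat.
Proof.
  induction n as [|n IH]; intros m Hm Hlt.
  - assert (m = 0%nat) by lia; subst; simpl in *; lia.
  - destruct (Nat.eq_dec m (S n)) as [->|Hne]; [lia|].
    assert (Hm' : (m <= n)%nat) by lia.
    cbn [Tmax Ssum] in *. pose proof (Ssum_mono x m n Hm').
    destruct (Nat.le_gt_cases (pq (S n) x) (Tmax n x)).
    + rewrite Nat.max_l in * by lia. specialize (IH m Hm' Hlt). lia.
    + rewrite Nat.max_r in * by lia. lia.
Qed.

Lemma S_upper x n : forall m, (m <= n)%nat ->
  (Ssum n x <= Ssum m x + (n - m) * Tmax n x)%nat.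
Proof.
  induction n as [|n IH]; intros m Hm.
  - assert (m = 0%nat) by lia; subst; simpl; lia.
  - destruct (Nat.eq_dec m (S n)) as [->|Hne]; [lia|].
    assert (Hm' : (m <= n)%nat) by lia.
    specialize (IH m Hm').
    assert (Ht : (Tmax n x <= Tmax (S n) x)%nat) by (apply Tmax_mono; lia).
    assert (Ha : (pq (S n) x <= Tmax (S n) x)%nat) by (cbn [Tmax]; lia).
    assert (Hmul : ((n - m) * Tmax n x <= (n - m) * Tmax (S n) x)%nat)
      by (apply Nat.mul_le_mono_l; auto).
    replace (S n - m)%nat with (S (n - m)) by lia.
    cbn [Ssum]. rewrite Nat.mul_succ_l. lia.
Qed.

Lemma nk_bounds L k : 0 < L -> INR (nk L k) <= (INR k / L) ^ 2 /\ (INR k / L) ^ 2 - 1 < INR (nk L k).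
Proof.
  intros HL. unfold nk, floorR, Int_part.
  set (r := (INR k / L) ^ 2).
  assert (Hr : 0 <= r) by (unfold r; apply pow2_ge_0).
  destruct (archimed r) as [H1 H2].
  assert (Hup : (0 <= up r - 1)%Z).
  { assert (IZR (up r) > 0) by lra. apply lt_IZR in H. lia. }
  rewrite INR_IZR_INZ, Z2Nat.id by auto. rewrite minus_IZR. lra.
Qed.

Theorem corollary1 (L : R) (x : R) (eps : R) :
  0 < L -> F_half_one x -> 0 < eps ->
  exists K : nat, forall k : nat, (K <= k)%nat ->
    (1 - eps) * exp (INR k / L)
      <= INR (Ssum (nk L k) x) - INR (Ssum (nk L (k - 1)) x)
    /\ INR (Ssum (nk L k) x) - INR (Ssum (nk L (k - 1)) x)
      <= (1 + eps) * (INR k / L) ^ 2 * exp (INR k / L).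
Proof.
  intros HL [_ [_ Hcv]] He.
  set (q := exp (- (1 / (2 * L)))).
  assert (Hq1 : q < 1).
  { unfold q. replace 1 with (exp 0) at 2 by apply exp_0. apply exp_increasing.
    assert (0 < 1 / (2 * L)) by (apply Rdiv_lt_0_compat; lra). lra. }
  assert (Hq0 : 0 < q) by apply exp_pos.
  assert (Hqq : exp (- (1 / L)) = q * q).
  { unfold q. rewrite <- exp_plus. f_equal. field. lra. }
  set (d := Rmin (eps / 2) (Rmin ((1 - q) / 4) (1 / 2))).
  assert (Hd0 : 0 < d).
  { unfold d. repeat apply Rmin_glb_lt; lra. }
  assert (Hd1 : d <= eps / 2) by apply Rmin_l.
  assert (Hd2 : d <= (1 - q) / 4) by (eapply Rle_trans; [apply Rmin_r | apply Rmin_l]).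
  assert (Hd3 : d <= 1 / 2) by (eapply Rle_trans; [apply Rmin_r | apply Rmin_r]).
  assert (Hdq : (1 + d) * q <= 1 - d).
  { assert (d * (1 + q) <= (1 - q) / 4 * (1 + q)) by (apply Rmult_le_compat_r; lra). nra. }
  destruct (Hcv d Hd0) as [N HN].
  assert (Hbnd : forall n, (n >= N)%nat ->
     (1 - d) * exp (sqrt (INR n)) < INR (Tmax n x) < (1 + d) * exp (sqrt (INR n))).
  { intros n Hn. specialize (HN n Hn). unfold R_dist in HN.
    apply Rabs_def2 in HN. destruct HN as [Ha Hb].
    pose proof (exp_pos (sqrt (INR n))) as Hp.
    set (E := exp (sqrt (INR n))) in *.
    assert (INR (Tmax n x) = (INR (Tmax n x) / E) * E) by (field; lra).
    split; nra. }
  set (M := L * (INR N + 2) + 2 * L * L + 2 * L / eps + L + 1).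
  assert (HM : 0 < M).
  { unfold M. pose proof (pos_INR N).
    assert (0 < 2 * L / eps) by (apply Rdiv_lt_0_compat; lra). nra. }
  destruct (archimed M) as [HA _].
  exists (Z.to_nat (up M)). intros k Hk.
  assert (HkM : M <= INR k).
  { apply le_INR in Hk. rewrite INR_IZR_INZ, Z2Nat.id in Hk.
    - lra.
    - assert (IZR (up M) > 0) by lra. apply lt_IZR in H. lia. }
  set (t := INR k / L).
  assert (Ht : INR k = t * L) by (unfold t; field; lra).
  assert (HtN : INR N + 2 <= t).
  { unfold M in HkM. assert (0 < 2 * L / eps) by (apply Rdiv_lt_0_compat; lra).
    pose proof (pos_INR N). nra. }
  assert (Ht2L : 2 * L <= t).
  { unfold M in HkM. assert (0 < 2 * L / eps) by (apply Rdiv_lt_0_compat; lra).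
    pose proof (pos_INR N). nra. }
  assert (Hte : 2 / eps <= t).
  { unfold M in HkM. pose proof (pos_INR N).
    assert (2 * L / eps = (2 / eps) * L) by (field; lra). nra. }
  assert (Hk1 : (1 <= k)%nat).
  { destruct k; [simpl in HkM; lra | lia]. }
  assert (Ht' : INR (k - 1) / L = t - 1 / L).
  { rewrite minus_INR by auto. simpl INR. unfold t. field. lra. }
  assert (HtL : INR N + 2 <= t - 1 / L).
  { unfold M in HkM. assert (0 < 2 * L / eps) by (apply Rdiv_lt_0_compat; lra).
    pose proof (pos_INR N). assert (1 / L * L = 1) by (field; lra). nra. }
  set (w := 1 / t).
  assert (Ht0 : 0 < t) by (pose proof (pos_INR N); lra).
  assert (Htw : t * w = 1) by (unfold w; field; lra).
  assert (Hw0 : 0 < w) by (unfold w; apply Rdiv_lt_0_compat; lra).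
  assert (Hw1 : w <= 1) by (pose proof (pos_INR N); nra).
  assert (Hwe : w <= eps / 2).
  { assert (eps * (2 / eps) = 2) by (field; lra).
    assert (eps * (2 / eps) <= eps * t) by (apply Rmult_le_compat_l; lra). nra. }
  assert (HwL : w <= 1 / (2 * L)).
  { assert (1 / (2 * L) * (2 * L) = 1) by (field; lra). nra. }
  set (n := nk L k). set (m := nk L (k - 1)).
  destruct (nk_bounds L k HL) as [Hn1 Hn2]. fold n t in Hn1, Hn2.
  destruct (nk_bounds L (k - 1) HL) as [Hm1 Hm2]. fold m in Hm1, Hm2.
  rewrite Ht' in Hm1, Hm2.
  assert (HnN : (n >= N)%nat).
  { destruct (le_lt_dec N n) as [|Hl]; [lia|]. apply lt_INR in Hl.
    pose proof (pos_INR N). nra. }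
  assert (HmN : (m >= N)%nat).
  { destruct (le_lt_dec N m) as [|Hl]; [lia|]. apply lt_INR in Hl.
    pose proof (pos_INR N). nra. }
  assert (Hsn1 : sqrt (INR n) <= t).
  { rewrite <- (sqrt_pow2 t) by lra. apply sqrt_le_1_alt; auto. }
  assert (Hsn2 : t - w <= sqrt (INR n)).
  { rewrite <- (sqrt_pow2 (t - w)) by nra. apply sqrt_le_1_alt. nra. }
  assert (Hsm : sqrt (INR m) <= t - 1 / L).
  { rewrite <- (sqrt_pow2 (t - 1 / L)) by (pose proof (pos_INR N); lra).
    apply sqrt_le_1_alt; auto. }
  set (E := exp t).
  assert (HE : 0 < E) by apply exp_pos.
  assert (Hew : exp (t - w) = E * exp (- w)) by (unfold E; rewrite <- exp_plus; f_equal; ring).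
  assert (HeL : exp (t - 1 / L) = E * (q * q)) by (unfold E; rewrite <- Hqq, <- exp_plus; f_equal; ring).
  assert (Hwq : q <= exp (- w)) by (unfold q; apply exple; lra).
  assert (Hw1e : 1 - w <= exp (- w)) by (pose proof (exp_ineq1_le (- w)); lra).
  assert (Hexn : E * exp (- w) <= exp (sqrt (INR n))) by (rewrite <- Hew; apply exple; auto).
  assert (Hexn2 : exp (sqrt (INR n)) <= E) by (apply exple; auto).
  assert (Hexm : exp (sqrt (INR m)) <= E * (q * q)) by (rewrite <- HeL; apply exple; auto).
  destruct (Hbnd n HnN) as [HA1 HA2].
  destruct (Hbnd m HmN) as [_ HB2].
  set (A := INR (Tmax n x)) in *. set (B := INR (Tmax m x)) in *.
  assert (HBA : B < A).
  { assert (E * q * q * (1 + d) <= E * q * (1 - d)).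
    { assert (0 < E * q) by (apply Rmult_lt_0_compat; lra).
      assert (E * q * ((1 + d) * q) <= E * q * (1 - d)) by (apply Rmult_le_compat_l; lra).
      nra. }
    assert ((1 - d) * (E * q) <= (1 - d) * (E * exp (- w))).
    { apply Rmult_le_compat_l; [lra|]. apply Rmult_le_compat_l; lra. }
    assert ((1 - d) * (E * exp (- w)) <= (1 - d) * exp (sqrt (INR n))).
    { apply Rmult_le_compat_l; lra. }
    assert ((1 + d) * exp (sqrt (INR m)) <= (1 + d) * (E * (q * q))).
    { apply Rmult_le_compat_l; lra. }
    nra. }
  assert (HTlt : (Tmax m x < Tmax n x)%nat) by (apply INR_lt; auto).
  assert (Hmn : (m <= n)%nat).
  { destruct (le_lt_dec m n) as [|Hl]; auto.
    pose proof (Tmax_mono x n m ltac:(lia)). lia. }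
  pose proof (S_lower x n m Hmn HTlt) as HL1.
  pose proof (S_upper x n m Hmn) as HU1.
  apply le_INR in HL1. apply le_INR in HU1.
  rewrite plus_INR in HL1. rewrite plus_INR, mult_INR, minus_INR in HU1 by auto.
  fold A in HL1, HU1. fold E.
  split.
  - assert ((1 - d) * (E * exp (- w)) <= (1 - d) * exp (sqrt (INR n))).
    { apply Rmult_le_compat_l; lra. }
    assert ((1 - d) * (E * (1 - w)) <= (1 - d) * (E * exp (- w))).
    { apply Rmult_le_compat_l; [lra|]. apply Rmult_le_compat_l; lra. }
    assert ((1 - eps) * E <= (1 - d) * (E * (1 - w))).
    { assert ((1 - eps) <= (1 - d) * (1 - w)) by nra. nra. }
    lra.
  - pose proof (pos_INR m).
    assert (0 <= A) by apply pos_INR.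
    assert ((INR n - INR m) * A <= INR n * A) by nra.
    assert (INR n * A <= t ^ 2 * A) by (apply Rmult_le_compat_r; lra).
    assert (A <= (1 + eps) * E).
    { assert ((1 + d) * exp (sqrt (INR n)) <= (1 + d) * E) by (apply Rmult_le_compat_l; lra).
      assert ((1 + d) * E <= (1 + eps) * E) by (apply Rmult_le_compat_r; lra). lra. }
    assert (t ^ 2 * A <= t ^ 2 * ((1 + eps) * E)) by (apply Rmult_le_compat_l; nra).
    lra.
Qed.
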